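(* Fix $\alpha\in[0,1)$. Let $M=(r,q,u)$ and $\tilde M=(\tilde r,\tilde q,\tilde u)$ be floor-randomized, left-continuous mechanisms satisfying DD, and suppose $\tilde M$ dominates $M$. Let $D=\{\theta\in\Theta:\tilde q(\theta)\tilde r(\theta)>q(\theta)r(\theta)\}$. Then $u(\theta)>\tilde u(\theta)$ for every $\theta\in D$.
   Context: Setting. Let $\Theta=[\underline\theta,\overline\theta]$ with $0<\underline\theta<\overline\theta$. Let $c>0$ and let $P:\mathbb R_+\to\mathbb R_+$ be continuous and strictly decreasing with $P(\overline q)=0$ for some $\overline q>0$. Put $V(q)=\int_0^q P(z)\,dz$ and $\mathrm{TS}(\theta,q)=V(q)-c-\theta q$ for $q>0$, $\mathrm{TS}(\theta,0)=0$. Assume (A2): $\mathrm{TS}(\overline\theta,P^{-1}(\overline\theta))>0$. A mechanism is a triple $M=(r,q,u)$ of functions $r:\Theta\to[0,1]$, $q:\Theta\to[0,\overline q]$, $u:\Theta\to\mathbb R$ with $q(\theta)=0$ if and only if $r(\theta)=0$. It is IC if $u(\theta)\ge u(\theta')+(\theta'-\theta)q(\theta')r(\theta')$ for all $\theta,\theta'\in\Theta$, and IR if $u(\theta)\ge 0$ for all $\theta$. (Known fact: $M$ is IC iff $\theta\mapsto q(\theta)r(\theta)$ is nonincreasing and $u(\theta)=u(\overline\theta)+\int_\theta^{\overline\theta}q(z)r(z)\,dz$ for all $\theta$; an IC mechanism is IR iff $u(\overline\theta)\ge0$.) The regulator's surplus at $\theta$ is $\mathrm{RS}_\alpha(\theta,M)=r(\theta)\,\mathrm{TS}(\theta,q(\theta))-(1-\alpha)u(\theta)$.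 An IC and IR mechanism $\tilde M$ dominates an IC and IR mechanism $M$ if $\mathrm{RS}_\alpha(\theta,\tilde M)\ge \mathrm{RS}_\alpha(\theta,M)$ for all $\theta\in\Theta$ with strict inequality for some $\theta$. The quantity floor $\hat q$ is the unique $q>0$ with $V(q)-qP(q)=c$. A mechanism $(r,q,u)$ is floor-randomized if it is IC, IR, $u(\overline\theta)=0$, and $\Theta$ can be partitioned into three pairwise disjoint (possibly empty) intervals $\Theta_1,\Theta_{01},\Theta_0$, with every element of $\Theta_0$ larger than every element of $\Theta_{01}$ and every element of $\Theta_{01}$ larger than every element of $\Theta_1$, such that: $q(\theta)\ge\hat q$ and $r(\theta)=1$ for $\theta\in\Theta_1$; $q(\theta)=\hat q$ and $r(\theta)\in(0,1)$ for $\theta\in\Theta_{01}$; $q(\theta)=r(\theta)=0$ for $\theta\in\Theta_0$. The efficient quantity is $q_e(\theta)=P^{-1}(\theta)$. A mechanism satisfies downward distortion (DD) if $q(\theta)\le q_e(\theta)$ for all $\theta$, with equality at $\theta=\underline\theta$. A mechanism is left continuous if $\theta\mapsto q(\theta)r(\theta)$ is left continuous at every $\theta\in(\underline\theta,\overline\theta]$. *)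

(* Defs.v *)
From Stdlib Require Import Reals Lra ClassicalEpsilon.
From Coquelicot Require Import Coquelicot.
Open Scope R_scope.

Definition InTheta (thl thh th : R) : Prop := thl <= th <= thh.

Definition V (P : R -> R) (q : R) : R := RInt P 0 q.

Definition TS (P : R -> R) (c th q : R) : R :=
  if Req_EM_T q 0 then 0 else V P q - c - th * q.

Definition qe (P : R -> R) (th : R) : R :=
  epsilon (inhabits 0) (fun q => 0 <= q /\ P q = th).

Definition is_mechanism (thl thh qbar : R) (r q u : R -> R) : Prop :=
  forall th, InTheta thl thh th ->
    0 <= r th <= 1 /\ 0 <= q th <= qbar /\ (q th = 0 <-> r th = 0).

Definition IC (thl thh : R) (r q u : R -> R) : Prop :=
  forall th th', InTheta thl thh th -> InTheta thl thh th' ->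
    u th >= u th' + (th' - th) * q th' * r th'.

Definition IR (thl thh : R) (u : R -> R) : Prop :=
  forall th, InTheta thl thh th -> u th >= 0.

Definition RS (P : R -> R) (c alpha : R) (r q u : R -> R) (th : R) : R :=
  r th * TS P c th (q th) - (1 - alpha) * u th.

Definition dominates (thl thh qbar : R) (P : R -> R) (c alpha : R)
    (rt qt ut r q u : R -> R) : Prop :=
  is_mechanism thl thh qbar rt qt ut /\ IC thl thh rt qt ut /\ IR thl thh ut /\
  is_mechanism thl thh qbar r q u /\ IC thl thh r q u /\ IR thl thh u /\
  (forall th, InTheta thl thh th -> RS P c alpha rt qt ut th >= RS P c alpha r q u th) /\
  (exists th, InTheta thl thh th /\ RS P c alpha rt qt ut th > RS P c alpha r q u th).

Definition is_interval (I : R -> Prop) : Prop :=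
  forall x y z, I x -> I z -> x <= y <= z -> I y.

Definition floor_randomized (thl thh qbar qhat : R) (r q u : R -> R) : Prop :=
  is_mechanism thl thh qbar r q u /\ IC thl thh r q u /\ IR thl thh u /\ u thh = 0 /\
  exists T1 T01 T0 : R -> Prop,
    is_interval T1 /\ is_interval T01 /\ is_interval T0 /\
    (forall th, T1 th \/ T01 th \/ T0 th <-> InTheta thl thh th) /\
    (forall th, ~ (T1 th /\ T01 th)) /\ (forall th, ~ (T1 th /\ T0 th)) /\
    (forall th, ~ (T01 th /\ T0 th)) /\
    (forall x y, T0 x -> T01 y -> x > y) /\
    (forall x y, T01 x -> T1 y -> x > y) /\
    (forall th, T1 th -> q th >= qhat /\ r th = 1) /\
    (forall th, T01 th -> q th = qhat /\ 0 < r th < 1) /\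
    (forall th, T0 th -> q th = 0 /\ r th = 0).

Definition DD (thl thh : R) (P : R -> R) (q : R -> R) : Prop :=
  (forall th, InTheta thl thh th -> q th <= qe P th) /\ q thl = qe P thl.

Definition left_continuous (thl thh : R) (r q : R -> R) : Prop :=
  forall th, thl < th <= thh ->
    forall eps, eps > 0 -> exists delta, delta > 0 /\
      forall t, thl <= t -> th - delta < t <= th ->
        Rabs (q t * r t - q th * r th) < eps.

(* Main.v *)
Require Import Defs.
From Stdlib Require Import Reals Lra Lia ClassicalEpsilon Classical.
From Coquelicot Require Import Coquelicot.
Open Scope R_scope.

Lemma TS_nz P c th q : q <> 0 -> TS P c th q = V P q - c - th * q.
Proof. intros H; unfold TS; destruct (Req_EM_T q 0); [contradiction|reflexivity]. Qed.

Lemma TS_0 P c th : TS P c th 0 = 0.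
Proof. unfold TS; destruct (Req_EM_T 0 0); [reflexivity|contradiction]. Qed.

Lemma qe_spec P thh qbar th :
  (forall x, continuity_pt P x) -> 0 < qbar -> P qbar = 0 ->
  (forall x y, 0 <= x -> x < y -> P y < P x) ->
  (exists q0, 0 <= q0 /\ P q0 = thh) -> 0 < th <= thh ->
  0 <= qe P th /\ P (qe P th) = th.
Proof.
  intros Hc Hq HPq Hd [q0 [Hq0 HP0]] Hth.
  unfold qe; apply epsilon_spec.
  assert (H0 : thh <= P 0).
  { destruct (Req_dec q0 0) as [->|Hn]; [lra|]. assert (P q0 < P 0) by (apply Hd; lra). lra. }
  destruct (Req_dec (P 0) th) as [E|E]. { exists 0; split; [lra|exact E]. }
  assert (Hcont : continuity (fun z => th - P z)).
  { intros x. apply continuity_pt_minus; [apply continuity_pt_const; intros ? ?; reflexivity|apply Hc]. }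
  destruct (IVT (fun z => th - P z) 0 qbar Hcont Hq) as [z [Hz Hfz]]; [lra|lra|].
  exists z; split; lra.
Qed.

Lemma P_anti P a b : (forall x y, 0 <= x -> x < y -> P y < P x) -> 0 <= a <= b -> P b <= P a.
Proof. intros Hd H. destruct (Req_dec a b) as [->|]; [lra|]. left; apply Hd; lra. Qed.

Lemma TS_mono P c th a b :
  (forall x, continuity_pt P x) -> 0 < a <= b ->
  (forall z, a <= z <= b -> th <= P z) -> TS P c th a <= TS P c th b.
Proof.
  intros Hc Hab Hz. rewrite !TS_nz by lra. unfold V.
  assert (Hex : forall u v, ex_RInt P u v).
  { intros u v; apply (@ex_RInt_continuous R_CompleteNormedModule); intros z _; apply continuity_pt_filterlim; apply Hc. }
  rewrite <- (RInt_Chasles P 0 a b) by apply Hex.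
  assert (th * (b - a) <= RInt P a b).
  { replace (th * (b - a)) with (RInt (fun _ => th) a b).
    2:{ rewrite RInt_const. unfold scal; simpl; unfold mult; simpl. ring. }
    apply RInt_le; try lra; try apply Hex. apply ex_RInt_const.
    intros x Hx; apply Hz; lra. }
  unfold plus; simpl. lra.
Qed.

Lemma fr_class thl thh qbar qhat r q u th :
  floor_randomized thl thh qbar qhat r q u -> InTheta thl thh th ->
  (q th >= qhat /\ r th = 1) \/ (q th = qhat /\ 0 < r th < 1) \/ (q th = 0 /\ r th = 0).
Proof.
  intros [_ [_ [_ [_ [T1 [T01 [T0 H]]]]]]] Hth.
  destruct H as [_ [_ [_ [Hp [_ [_ [_ [_ [_ [H1 [H2 H3]]]]]]]]]]].
  destruct (proj2 (Hp th) Hth) as [h|[h|h]]; [left|right;left|right;right]; auto.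
Qed.

Lemma IC_bounds thl thh r q u s t :
  IC thl thh r q u -> InTheta thl thh s -> InTheta thl thh t ->
  (t - s) * (q t * r t) <= u s - u t <= (t - s) * (q s * r s).
Proof.
  intros H Hs Ht. pose proof (H s t Hs Ht). pose proof (H t s Ht Hs). split; nra.
Qed.

Lemma x_bounds thl thh qbar r q u th :
  is_mechanism thl thh qbar r q u -> InTheta thl thh th ->
  0 <= q th * r th <= qbar.
Proof. intros H Hth. destruct (H th Hth) as [Hr [Hq _]]. split; nra. Qed.

Lemma W_mono thl thh qbar P c qhat rr qq uu rt qt ut th :
  (forall x, continuity_pt P x) ->
  (forall x y, 0 <= x -> x < y -> P y < P x) ->
  0 < qhat -> V P qhat - qhat * P qhat = c ->
  floor_randomized thl thh qbar qhat rr qq uu ->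
  floor_randomized thl thh qbar qhat rt qt ut ->
  InTheta thl thh th -> 0 <= qe P th -> P (qe P th) = th ->
  qq th <= qe P th ->
  qt th * rt th < qq th * rr th ->
  rt th * TS P c th (qt th) <= rr th * TS P c th (qq th).
Proof.
  intros Hc Hd Hqh Hv HM HMt Hth He HPe Hdd Hlt.
  assert (Hmt := proj1 HMt). assert (Hm := proj1 HM).
  destruct (Hmt th Hth) as [Hrt [Hqt _]].
  assert (TSq : TS P c th qhat = qhat * P qhat - th * qhat) by (rewrite TS_nz by lra; lra).
  destruct (fr_class _ _ _ _ _ _ _ _ HM Hth) as [[Hq Hr]|[[Hq Hr]|[Hq Hr]]].
  2:{
    assert (Hz : forall z, qhat <= z <= qe P th -> th <= P z).
    { intros z Hz; rewrite <- HPe; apply P_anti; auto; lra. }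
    assert (Pq : th <= P qhat) by (apply Hz; lra).
    assert (TSp : 0 <= TS P c th qhat) by (rewrite TSq; nra).
    rewrite Hq in *.
    destruct (fr_class _ _ _ _ _ _ _ _ HMt Hth) as [[Hq' Hr']|[[Hq' Hr']|[Hq' Hr']]].
    - rewrite Hr' in Hlt. nra.
    - rewrite Hq' in *. assert (rt th < rr th) by nra. nra.
    - rewrite Hr'. nra. }
  2:{ rewrite Hq in Hlt. nra. }
  assert (Hz : forall z, qhat <= z <= qe P th -> th <= P z).
  { intros z Hz; rewrite <- HPe; apply P_anti; auto; lra. }
  assert (Pq : th <= P qhat) by (apply Hz; lra).
  assert (TSp : 0 <= TS P c th qhat) by (rewrite TSq; nra).
  assert (TSm : TS P c th qhat <= TS P c th (qq th)).
  { apply TS_mono; auto; [lra|]. intros z Hz'; apply Hz; lra. }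
  rewrite Hr.
  destruct (fr_class _ _ _ _ _ _ _ _ HMt Hth) as [[Hq' Hr']|[[Hq' Hr']|[Hq' Hr']]].
  - rewrite Hr'. rewrite Hr, Hr' in Hlt.
    assert (TS P c th (qt th) <= TS P c th (qq th)).
    { apply TS_mono; auto; [lra|]. intros z Hz'; apply Hz; lra. }
    lra.
  - rewrite Hq'. nra.
  - rewrite Hr'. nra.
Qed.

Lemma W_low thl thh qbar P c qhat rr qq uu rt qt ut :
  0 < qhat -> V P qhat - qhat * P qhat = c -> thl <= thh ->
  floor_randomized thl thh qbar qhat rr qq uu ->
  floor_randomized thl thh qbar qhat rt qt ut ->
  P (qe P thl) = thl -> qq thl = qe P thl -> qt thl = qe P thl ->
  rt thl * TS P c thl (qt thl) = rr thl * TS P c thl (qq thl).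
Proof.
  intros Hqh Hv Hle HM HMt HPe Hq1 Hq2.
  assert (Hth : InTheta thl thh thl) by (unfold InTheta; lra).
  rewrite Hq1, Hq2.
  assert (Z : qhat = qe P thl -> TS P c thl (qe P thl) = 0).
  { intros E. rewrite <- E. rewrite TS_nz by lra. rewrite <- E in HPe. rewrite HPe in Hv. lra. }
  destruct (fr_class _ _ _ _ _ _ _ _ HM Hth) as [[Hq Hr]|[[Hq Hr]|[Hq Hr]]].
  - destruct (fr_class _ _ _ _ _ _ _ _ HMt Hth) as [[Hq' Hr']|[[Hq' Hr']|[Hq' Hr']]].
    + rewrite Hr, Hr'; ring.
    + rewrite Z by lra. ring.
    + rewrite Hq2 in Hq'. rewrite Hq' in *. rewrite TS_0. ring.
  - rewrite Z by lra. ring.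
  - rewrite Hq1 in Hq. rewrite Hq in *. rewrite TS_0. ring.
Qed.

Lemma d_mono (d x xt : R -> R) (a b K : R) :
  a < b -> 0 <= K ->
  (forall s t, a <= s -> s < t -> t <= b -> d s - d t >= (t - s) * (xt t - x s)) ->
  (forall t, a < t <= b -> x t <= xt t) ->
  (forall t, a <= t <= b -> 0 <= x t <= K) ->
  d b <= d a.
Proof.
  intros Hab HK Hd Hx HxK.
  destruct (Rle_or_lt (d b) (d a)) as [|Hlt]; [assumption|exfalso].
  destruct (INR_archimed (d b - d a) ((b - a) * K)) as [N HN]; [lra|].
  assert (HN0 : 0 < INR N).
  { destruct N. simpl in HN. nra. apply lt_0_INR; lia. }
  set (h := (b - a) / INR N).
  assert (Hh : 0 < h) by (unfold h; apply Rdiv_lt_0_compat; lra).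
  assert (HNh : INR N * h = b - a) by (unfold h; field; lra).
  assert (Claim : forall k, (k <= N)%nat ->
     d a - d (a + INR k * h) >= h * (x (a + INR k * h) - x a)).
  { induction k as [|k IH]; intros Hk.
    - simpl. replace (a + 0 * h) with a by ring. lra.
    - assert (Hk' : (k <= N)%nat) by lia. specialize (IH Hk').
      assert (HkN : INR (S k) <= INR N) by (apply le_INR; lia).
      rewrite S_INR in *.
      assert (Hk0 : 0 <= INR k) by apply pos_INR.
      assert (H1 := Hd (a + INR k * h) (a + (INR k + 1) * h)).
      assert (H2 := Hx (a + (INR k + 1) * h)).
      assert ((INR k + 1) * h <= b - a) by nra.
      assert (a <= a + INR k * h) by nra.
      specialize (H1 ltac:(lra) ltac:(nra) ltac:(lra)).
      specialize (H2 ltac:(split; nra)).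
      replace (a + (INR k + 1) * h - (a + INR k * h)) with h in H1 by ring.
      nra. }
  specialize (Claim N (le_n N)). rewrite HNh in Claim.
  replace (a + (b - a)) with b in Claim by ring.
  destruct (HxK b ltac:(lra)). destruct (HxK a ltac:(lra)).
  assert (d b - d a <= h * K) by nra.
  assert (INR N * (d b - d a) <= INR N * (h * K)) by (apply Rmult_le_compat_l; lra).
  nra.
Qed.

Lemma sup_contra (d : R -> R) (l t1 K : R) :
  l <= t1 -> 0 < K -> d l <= 0 -> 0 < d t1 ->
  (forall w a, l <= w -> w <= a -> a <= t1 -> d a <= d w + (a - w) * K) ->
  (forall a, l <= a -> a < t1 -> (forall t, a < t <= t1 -> 0 < d t) -> d t1 <= d a) ->
  False.
Proof.
  intros Hl HK Hdl Hd1 Lip Mono.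
  set (E := fun t => l <= t <= t1 /\ d t <= 0).
  destruct (completeness E) as [z [Hub Hlub]].
  { exists t1. intros t [Ht _]. lra. }
  { exists l. split; lra. }
  assert (Hzl : l <= z) by (apply Hub; split; [lra|assumption]).
  assert (Hz1 : z <= t1) by (apply Hlub; intros t [Ht _]; lra).
  set (eta := d t1 / (4 * K)).
  assert (Heta : 0 < eta) by (unfold eta; apply Rdiv_lt_0_compat; lra).
  assert (HetaK : eta * K = d t1 / 4) by (unfold eta; field; lra).
  assert (Hw : exists w, E w /\ z - eta < w).
  { apply NNPP; intros Hn.
    assert (z <= z - eta); [|lra].
    apply Hlub. intros t Et. apply Rnot_lt_le. intros Hlt. apply Hn. exists t; auto. }
  destruct Hw as [w [[Hw1 Hw2] Hw3]].
  assert (Hwz : w <= z) by (apply Hub; split; auto).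
  destruct (Rle_lt_or_eq_dec z t1 Hz1) as [Hlt|Heq].
  - set (a := Rmin (z + eta) t1).
    assert (Ha1 : z < a) by (unfold a; apply Rmin_glb_lt; lra).
    assert (Ha2 : a <= t1) by (unfold a; apply Rmin_r).
    assert (Ha3 : a <= z + eta) by (unfold a; apply Rmin_l).
    assert (Hda : d t1 <= d a).
    { destruct (Rle_lt_or_eq_dec a t1 Ha2) as [Ha|Ha]; [|rewrite Ha; lra].
      apply Mono; [lra|lra|]. intros t Ht.
      apply Rnot_le_lt. intros Hle. assert (t <= z) by (apply Hub; split; [lra|assumption]). lra. }
    assert (Hl2 := Lip w a ltac:(lra) ltac:(lra) ltac:(lra)).
    assert ((a - w) * K <= (2 * eta) * K) by (apply Rmult_le_compat_r; lra).
    lra.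
  - assert (Hl2 := Lip w t1 ltac:(lra) ltac:(lra) ltac:(lra)).
    assert ((t1 - w) * K <= eta * K) by (apply Rmult_le_compat_r; lra).
    lra.
Qed.

Theorem lemma8
  (thl thh c qbar : R) (P : R -> R) (qhat alpha : R)
  (rr qq uu rt qt ut : R -> R)
  (Hth : 0 < thl < thh) (Hc : 0 < c)
  (HPcont : forall x, continuity_pt P x)
  (HPdec : forall x y, 0 <= x -> x < y -> P y < P x)
  (Hqbar : 0 < qbar) (HPqbar : P qbar = 0)
  (HA2 : exists q0, 0 <= q0 /\ P q0 = thh /\ TS P c thh q0 > 0)
  (Hqhat : 0 < qhat /\ V P qhat - qhat * P qhat = c)
  (Halpha : 0 <= alpha < 1)
  (HM : floor_randomized thl thh qbar qhat rr qq uu)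
  (HMt : floor_randomized thl thh qbar qhat rt qt ut)
  (HMlc : left_continuous thl thh rr qq)
  (HMtlc : left_continuous thl thh rt qt)
  (HMdd : DD thl thh P qq)
  (HMtdd : DD thl thh P qt)
  (Hdom : dominates thl thh qbar P c alpha rt qt ut rr qq uu) :
  forall th, InTheta thl thh th ->
    qt th * rt th > qq th * rr th -> uu th > ut th.
Proof.
  intros th Hth0 HD.
  destruct Hqhat as [Hqh Hv].
  destruct Hdom as (Hmt & Hict & Hirt & Hm & Hic & Hir & Hge & Hstrict).
  assert (Hqe : forall t, InTheta thl thh t -> 0 <= qe P t /\ P (qe P t) = t).
  { intros t Ht. destruct HA2 as [q0 [H1 [H2 _]]].
    apply (qe_spec P thh qbar); auto. exists q0; auto. unfold InTheta in Ht; lra. }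
  assert (Hlow : InTheta thl thh thl) by (unfold InTheta; lra).
  assert (HF3 : forall t, InTheta thl thh t -> qt t * rt t < qq t * rr t -> ut t - uu t <= 0).
  { intros t Ht Hlt. destruct (Hqe t Ht) as [He HPe].
    assert (HW := W_mono thl thh qbar P c qhat rr qq uu rt qt ut t HPcont HPdec Hqh Hv HM HMt Ht He HPe
                   (proj1 HMdd t Ht) Hlt).
    specialize (Hge t Ht). unfold RS in Hge.
    apply Rnot_lt_le; intros Hn.
    assert (0 < (1 - alpha) * (ut t - uu t)) by (apply Rmult_lt_0_compat; lra). lra. }
  assert (HF4 : ut thl - uu thl <= 0).
  { destruct (Hqe thl Hlow) as [He HPe].
    assert (HW := W_low thl thh qbar P c qhat rr qq uu rt qt ut Hqh Hv ltac:(lra) HM HMt HPe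
                   (proj2 HMdd) (proj2 HMtdd)).
    specialize (Hge thl Hlow). unfold RS in Hge.
    apply Rnot_lt_le; intros Hn.
    assert (0 < (1 - alpha) * (ut thl - uu thl)) by (apply Rmult_lt_0_compat; lra). lra. }
  assert (HDlt : forall s t, InTheta thl thh s -> InTheta thl thh t ->
     (ut s - uu s) - (ut t - uu t) >= (t - s) * (qt t * rt t - qq s * rr s)).
  { intros s t Hs Ht. pose proof (IC_bounds _ _ _ _ _ s t Hict Hs Ht).
    pose proof (IC_bounds _ _ _ _ _ s t Hic Hs Ht). nra. }
  assert (HA : forall t, InTheta thl thh t -> ut t - uu t <= 0).
  { intros t1 Ht1. apply Rnot_lt_le; intros Hpos.
    apply (sup_contra (fun t => ut t - uu t) thl t1 qbar); auto.
    - unfold InTheta in Ht1; lra.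
    - intros w a Hw1 Hw2 Ha. unfold InTheta in Ht1.
      assert (Hw : InTheta thl thh w) by (unfold InTheta; lra).
      assert (Ha' : InTheta thl thh a) by (unfold InTheta; lra).
      pose proof (IC_bounds _ _ _ _ _ w a Hict Hw Ha').
      pose proof (IC_bounds _ _ _ _ _ w a Hic Hw Ha').
      pose proof (x_bounds _ _ _ _ _ _ _ Hmt Ha').
      pose proof (x_bounds _ _ _ _ _ _ _ Hm Hw). nra.
    - intros a Ha1 Ha2 Hpos'. unfold InTheta in Ht1.
      apply (d_mono (fun t => ut t - uu t) (fun t => qq t * rr t) (fun t => qt t * rt t) a t1 qbar);
        [lra|lra| | | ].
      + intros s t Hs Hst Ht. apply HDlt; unfold InTheta; lra.
      + intros t Ht. apply Rnot_lt_le. intros Hn.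
        specialize (HF3 t ltac:(unfold InTheta; lra) Hn). specialize (Hpos' t Ht). lra.
      + intros t Ht. apply (x_bounds _ _ _ _ _ _ _ Hm). unfold InTheta; lra. }
  apply Rnot_le_lt. intros Hle.
  assert (Hd0 : ut th - uu th = 0) by (specialize (HA th Hth0); lra).
  destruct (Rle_lt_or_eq_dec thl th (proj1 Hth0)) as [Hgt|Heq].
  -
    destruct (HMlc th ltac:(unfold InTheta in Hth0; lra) (qt th * rt th - qq th * rr th) ltac:(lra))
      as [delta [Hdel Hlc]].
    set (t1 := Rmax thl (th - delta / 2)).
    assert (H1 : thl <= t1) by apply Rmax_l.
    assert (H2 : th - delta / 2 <= t1) by apply Rmax_r.
    assert (H3 : t1 < th) by (unfold t1; apply Rmax_lub_lt; lra).
    specialize (Hlc t1 H1 ltac:(lra)). apply Rabs_def2 in Hlc.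
    assert (Ht1 : InTheta thl thh t1) by (unfold InTheta in *; lra).
    specialize (HDlt t1 th Ht1 Hth0). specialize (HA t1 Ht1).
    assert (0 < (th - t1) * (qt th * rt th - qq t1 * rr t1)) by (apply Rmult_lt_0_compat; lra).
    lra.
  -
    subst th.
    destruct (Hqe thl Hlow) as [He HPe].
    pose proof (proj2 HMdd) as Hq1. pose proof (proj2 HMtdd) as Hq2.
    destruct (Hmt thl Hlow) as [Hrt [Hqt _]].
    destruct (Hm thl Hlow) as [Hrr [Hqq _]].
    assert (Hqhat : qq thl = qhat).
    { destruct (fr_class _ _ _ _ _ _ _ _ HM Hlow) as [[Hq Hr]|[[Hq Hr]|[Hq Hr]]].
      - rewrite Hr in HD. rewrite Hq2, <- Hq1 in HD. nra.
      - exact Hq.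
      - rewrite Hq in Hq1. rewrite <- Hq1 in Hq2. rewrite Hq2, Hq in HD. nra. }
    assert (HPq : P qhat = thl) by (rewrite <- Hqhat, Hq1; exact HPe).
    assert (Hzero : forall t, InTheta thl thh t -> thl < t ->
       forall r q u, floor_randomized thl thh qbar qhat r q u -> DD thl thh P q -> q t = 0 /\ r t = 0).
    { intros t Ht Htl r q u HF HDD.
      destruct (Hqe t Ht) as [Et PEt].
      assert (Hlt : qe P t < qhat).
      { apply Rnot_le_lt; intros Hn. assert (P qhat >= P (qe P t)) by (apply Rle_ge, P_anti; auto; lra). lra. }
      pose proof (proj1 HDD t Ht).
      destruct (fr_class _ _ _ _ _ _ _ _ HF Ht) as [[Hq Hr]|[[Hq Hr]|[Hq Hr]]]; try lra; auto.
      }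
    assert (Hu0 : forall t, InTheta thl thh t -> thl < t ->
       forall r q u, floor_randomized thl thh qbar qhat r q u -> DD thl thh P q -> u t = 0).
    { intros t Ht Htl r q u HF HDD.
      pose proof (Hzero t Ht Htl r q u HF HDD).
      destruct HF as (_ & HFic & HFir & HFu & _).
      assert (Hh : InTheta thl thh thh) by (unfold InTheta; lra).
      pose proof (IC_bounds _ _ _ _ _ t thh HFic Ht Hh). specialize (HFir t Ht).
      destruct H as [Hq Hr]. rewrite Hq, Hr in H0. lra. }
    destruct Hstrict as [t [Ht Hs]]. unfold RS in Hs.
    destruct (Rle_lt_or_eq_dec thl t (proj1 Ht)) as [Htl|<-].
    + destruct (Hzero t Ht Htl _ _ _ HM HMdd) as [_ Z1].
      destruct (Hzero t Ht Htl _ _ _ HMt HMtdd) as [_ Z2].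
      rewrite (Hu0 t Ht Htl _ _ _ HM HMdd), (Hu0 t Ht Htl _ _ _ HMt HMtdd), Z1, Z2 in Hs. lra.
    + assert (HW := W_low thl thh qbar P c qhat rr qq uu rt qt ut Hqh Hv ltac:(lra) HM HMt HPe Hq1 Hq2).
      nra.
Qed.
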